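(* Let $n>m>0$ be integers and let $\nu\in\mathbb{N}^3$ with $|\nu|=n$. Then $$\sum_{\substack{\mu\in\mathbb{N}^3,\ |\mu|=m\\ \mu\le\nu}} P_\mu(q)\,P_{\nu-\mu}(q)=\binom{n}{m}P_\nu(q)\qquad\text{for all }q\in\mathbb{H},$$ where $\mu\le\nu$ means componentwise inequality.
   Context: Quaternions are written $q=t+e_1x_1+e_2x_2+e_3x_3$ with $e_1=i,e_2=j,e_3=k$. For $\nu=(n_1,n_2,n_3)\in\mathbb{N}^3$ put $|\nu|=n_1+n_2+n_3$. Define $z_j(q)=t e_j-x_j$ for $j=1,2,3$. For $|\nu|=n\ge1$ let $I_\nu$ be the set of $n$-tuples $(i_1,\dots,i_n)\in\{1,2,3\}^n$ in which the value $j$ occurs exactly $n_j$ times, and set $P_\nu(q)=\frac{1}{n!}\sum_{(i_1,\dots,i_n)\in I_\nu} z_{i_1}(q)z_{i_2}(q)\cdots z_{i_n}(q)$ (quaternion products in the indicated order); $P_{(0,0,0)}=1$. *)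

(* Defs.v *)
(* Real quaternions over an arbitrary real field R
   (the paper's H is the case R = the real numbers). *)
From HB Require Import structures.
From mathcomp Require Import all_boot all_order all_algebra.
Set Implicit Arguments. Unset Strict Implicit. Unset Printing Implicit Defensive.
Import Order.TTheory GRing.Theory Num.Theory.
Local Open Scope ring_scope.

Section Quaternions.
Variable R : realFieldType.

Record quat := Quat { qt : R; qx1 : R; qx2 : R; qx3 : R }.

Definition quat2tuple (q : quat) := (qt q, qx1 q, qx2 q, qx3 q).
Definition tuple2quat (p : R * R * R * R) :=
  let: (a, b, c, d) := p in Quat a b c d.
Lemma quat2tupleK : cancel quat2tuple tuple2quat. Proof. by case. Qed.

HB.instance Definition _ := Equality.copy quat (can_type quat2tupleK).
HB.instance Definition _ := Choice.copy quat (can_type quat2tupleK).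

Definition qzero := Quat 0 0 0 0.
Definition qopp q := Quat (- qt q) (- qx1 q) (- qx2 q) (- qx3 q).
Definition qadd p q :=
  Quat (qt p + qt q) (qx1 p + qx1 q) (qx2 p + qx2 q) (qx3 p + qx3 q).

Lemma qaddA : associative qadd.
Proof. by move=> [? ? ? ?] [? ? ? ?] [? ? ? ?]; rewrite /qadd /= !addrA. Qed.
Lemma qaddC : commutative qadd.
Proof. by move=> [a b c d] [a' b' c' d']; rewrite /qadd /= (addrC a) (addrC b)
  (addrC c) (addrC d). Qed.
Lemma qadd0 : left_id qzero qadd.
Proof. by move=> [? ? ? ?]; rewrite /qadd /= !add0r. Qed.
Lemma qaddN : left_inverse qzero qopp qadd.
Proof. by move=> [? ? ? ?]; rewrite /qadd /= !addNr. Qed.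

HB.instance Definition _ := GRing.isZmodule.Build quat qaddA qaddC qadd0 qaddN.

(* Hamilton product, with e1 = i, e2 = j, e3 = k *)
Definition qmul p q :=
  Quat (qt p * qt q - qx1 p * qx1 q - qx2 p * qx2 q - qx3 p * qx3 q)
       (qt p * qx1 q + qx1 p * qt q + qx2 p * qx3 q - qx3 p * qx2 q)
       (qt p * qx2 q - qx1 p * qx3 q + qx2 p * qt q + qx3 p * qx1 q)
       (qt p * qx3 q + qx1 p * qx2 q - qx2 p * qx1 q + qx3 p * qt q).

Definition qone := Quat 1 0 0 0.

Definition qscale (c : R) q := Quat (c * qt q) (c * qx1 q) (c * qx2 q) (c * qx3 q).

Definition qreal (c : R) := Quat c 0 0 0.

(* imaginary units e_1, e_2, e_3, indexed by j : 'I_3 (index 0 is e_1) *)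
Definition qe (j : 'I_3) : quat :=
  Quat 0 (if val j == 0%N then 1 else 0) (if val j == 1%N then 1 else 0)
         (if val j == 2%N then 1 else 0).

(* the coordinate x_j of q, j : 'I_3 (index 0 is x_1) *)
Definition qcoord (q : quat) (j : 'I_3) : R :=
  if val j == 0%N then qx1 q else if val j == 1%N then qx2 q else qx3 q.

Definition zq (j : 'I_3) (q : quat) : quat :=
  qscale (qt q) (qe j) - qreal (qcoord q j).

Definition zprod (s : seq 'I_3) (q : quat) : quat :=
  foldr (fun j acc => qmul (zq j q) acc) qone s.

(* multi-indices nu in N^3 are functions 'I_3 -> nat; |nu| = sum of entries *)
Definition mabs (nu : 'I_3 -> nat) : nat := (\sum_(j < 3) nu j)%N.

(* P_nu(q) = 1/n! * sum over n-tuples in which j occurs exactly nu_j times.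
   For nu = 0 this is the empty product 1, i.e. P_0 = 1. *)
Definition Pnu (nu : 'I_3 -> nat) (q : quat) : quat :=
  qscale ((mabs nu)`!%:R)^-1
    (\sum_(s : (mabs nu).-tuple 'I_3 | [forall j, count_mem j s == nu j])
        zprod s q).

End Quaternions.

(* Main.v *)
Require Import Defs.
From HB Require Import structures.
From mathcomp Require Import all_boot all_order all_algebra.
From mathcomp Require Import ring.
Import Order.TTheory GRing.Theory Num.Theory.
Local Open Scope ring_scope.

Section Q.
Variable R : realFieldType.
Implicit Types p q r : quat R.

Lemma quatE (a b : quat R) : qt a = qt b -> qx1 a = qx1 b -> qx2 a = qx2 b ->
  qx3 a = qx3 b -> a = b.
Proof. by case: a => ????; case: b => ???? /= -> -> -> ->. Qed.

Lemma qmulA : associative (@qmul R).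
Proof. move=> [????] [????] [????]; apply: quatE; rewrite /=; ring. Qed.
Lemma qmul1 : left_id (@qone R) (@qmul R).
Proof. move=> [????]; apply: quatE; rewrite /=; ring. Qed.
Lemma qmulr1 : right_id (@qone R) (@qmul R).
Proof. move=> [????]; apply: quatE; rewrite /=; ring. Qed.
Lemma qmulDl : left_distributive (@qmul R) +%R.
Proof. move=> [????] [????] [????]; apply: quatE; rewrite /=; ring. Qed.
Lemma qmulDr : right_distributive (@qmul R) +%R.
Proof. move=> [????] [????] [????]; apply: quatE; rewrite /=; ring. Qed.
Lemma qone_neq0 : (@qone R) != 0.
Proof. apply/eqP => /(congr1 (@qt R)) /= /eqP; by rewrite oner_eq0. Qed.
End Q.

HB.instance Definition _ (R : realFieldType) :=
  GRing.Zmodule_isNzRing.Build (quat R) (@qmulA R) (@qmul1 R) (@qmulr1 R)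
    (@qmulDl R) (@qmulDr R) (@qone_neq0 R).

Section Q2.
Variable R : realFieldType.
Implicit Types p q r : quat R.

Lemma qmulE p q : qmul p q = p * q. Proof. by []. Qed.
Lemma qscaleE c q : qscale c q = qreal c * q.
Proof. by apply: quatE; rewrite /=; ring. Qed.
Lemma qrealC c q : qreal c * q = q * qreal c.
Proof. by apply: quatE; rewrite /=; ring. Qed.
Lemma qrealM a b : qreal (a * b) = qreal a * qreal b :> quat R.
Proof. by apply: quatE; rewrite /=; ring. Qed.
End Q2.
Section Comb.
Variable R : realFieldType.
Variable q : quat R.

Definition Sq k (nu : 'I_3 -> nat) : quat R :=
  \sum_(s : k.-tuple 'I_3 | [forall j, count_mem j s == nu j]) zprod s q.

Lemma zprodE (s : seq 'I_3) : zprod s q = \prod_(j <- s) zq j q.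
Proof. by elim: s => [|x s IH]; rewrite ?big_nil ?big_cons //= IH. Qed.

Lemma zprod_cat s t : zprod (s ++ t) q = zprod s q * zprod t q.
Proof. by rewrite !zprodE big_cat. Qed.

Lemma sum_count (s : seq 'I_3) : (\sum_(j < 3) count_mem j s)%N = size s.
Proof.
elim: s => [|x s IH]; first by rewrite big1.
rewrite /= big_split /= IH -[(size s).+1]add1n; congr (_ + _)%N.
rewrite (bigD1 x) //= eqxx big1 // => j /negbTE.
by rewrite eq_sym => ->.
Qed.

Lemma reindex_cat a b (P : pred (seq 'I_3)) (F : seq 'I_3 -> quat R) :
  \sum_(s : (a + b).-tuple 'I_3 | P s) F s =
  \sum_(p : a.-tuple 'I_3 * b.-tuple 'I_3 | P (p.1 ++ p.2)) F (p.1 ++ p.2).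
Proof.
pose t0a := [tuple of nseq a (@ord0 2)].
pose t0b := [tuple of nseq b (@ord0 2)].
pose g (s : (a + b).-tuple 'I_3) := (insubd t0a (take a s), insubd t0b (drop a s)).
rewrite (reindex (fun p : a.-tuple 'I_3 * b.-tuple 'I_3 => cat_tuple p.1 p.2)) //.
exists g => [[x y] _ | s _].
  rewrite /g; congr pair; apply: val_inj; rewrite val_insubd /=.
    by rewrite take_size_cat ?size_tuple // eqxx.
  by rewrite drop_size_cat ?size_tuple // eqxx.
apply: val_inj; rewrite /= !val_insubd size_take size_drop size_tuple.
have -> : (if (a < a + b)%N then a else (a + b)%N) = a.
  by case: ifP => // /negbT; rewrite -leqNgt => h; apply/eqP; rewrite eqn_leq h leq_addr.
by rewrite addKn !eqxx cat_take_drop.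
Qed.

Lemma splitS a b N (nu : 'I_3 -> nat) (haN : (a <= N)%N) :
  Sq (a + b) nu =
  \sum_(mu : {ffun 'I_3 -> 'I_N.+1}
          | [forall j, (val (mu j) <= nu j)%N] && (mabs (fun j => val (mu j)) == a))
     Sq a (fun j => val (mu j)) * Sq b (fun j => (nu j - val (mu j))%N).
Proof.
rewrite /Sq (@reindex_cat a b (fun s => [forall j, count_mem j s == nu j])).
transitivity (\sum_(x : a.-tuple 'I_3) \sum_(y : b.-tuple 'I_3 |
   [forall j, count_mem j (x ++ y) == nu j]) zprod x q * zprod y q).
  rewrite pair_big_dep; apply: eq_big => /= [p|p _] //; exact: zprod_cat.
rewrite (bigID (fun x : a.-tuple 'I_3 => [forall j, count_mem j x <= nu j]%N)) /=.
rewrite [X in _ + X]big1 ?addr0; last first.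
  move=> x /forallPn [j Hj]; rewrite big_pred0 // => y.
  apply/negbTE/negP => /forallP /(_ j) /eqP; rewrite count_cat => E.
  by move: Hj; rewrite -E leq_addr.
have cntN (x : a.-tuple 'I_3) j : (count_mem j x <= N)%N.
  by apply: leq_trans (count_size _ _) _; rewrite size_tuple.
rewrite (partition_big (fun x : a.-tuple 'I_3 =>
   [ffun j => (inord (count_mem j x) : 'I_N.+1)]) (fun mu : {ffun 'I_3 -> 'I_N.+1} => [forall j, (val (mu j) <= nu j)%N] && (mabs (fun j => val (mu j)) == a))) /=; last first.
  move=> x /forallP Hx; apply/andP; split.
    by apply/forallP => j; rewrite ffunE inordK ?ltnS.
  apply/eqP; rewrite /mabs -[RHS](size_tuple x) -sum_count.
  by apply: eq_bigr => j _; rewrite ffunE inordK ?ltnS.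
apply: eq_bigr => mu /andP [/forallP Hmu _].
rewrite mulr_suml; apply: eq_big => [x | x].
  apply/andP/forallP => [[_ /eqP <- j] | H].
    by rewrite ffunE inordK ?ltnS.
  split.
    by apply/forallP => j; rewrite (eqP (H j)) Hmu.
  apply/eqP/ffunP => j; rewrite ffunE; apply: val_inj; rewrite /= inordK ?ltnS //.
  exact/eqP.
move=> /andP [_ /eqP Hp].
have Hx j : count_mem j x = val (mu j) by rewrite -Hp ffunE /= inordK ?ltnS.
rewrite mulr_sumr; apply: eq_bigl => y.
apply/forallP/forallP => H j; move: (H j) (Hx j) (Hmu j); rewrite count_cat.
  by move=> /eqP <- ->; rewrite addKn.
by move=> /eqP -> -> ?; rewrite subnKC.
Qed.
End Comb.
Arguments Sq {R} q k nu.

Theorem mainTheorem1 (R : realFieldType) (n m : nat) (nu : 'I_3 -> nat)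
  (hm : (0 < m)%N) (hmn : (m < n)%N) (hnu : mabs nu = n) (q : quat R) :
  \sum_(mu : {ffun 'I_3 -> 'I_n.+1}
          | [forall j, (val (mu j) <= nu j)%N] && (mabs (fun j => val (mu j)) == m))
     qmul (Pnu (fun j => val (mu j)) q) (Pnu (fun j => (nu j - val (mu j))%N) q)
  = qscale ('C(n, m))%:R (Pnu nu q).
Proof.
have PE k (nu' : 'I_3 -> nat) : mabs nu' = k ->
    Pnu nu' q = qreal (k`!%:R^-1) * Sq q k nu'.
  by move=> <-; rewrite /Pnu qscaleE.
have hmn' : (m <= n)%N by apply: ltnW.
transitivity (qreal ((m`!%:R^-1) * ((n - m)`!%:R^-1)) *
  \sum_(mu : {ffun 'I_3 -> 'I_n.+1}
          | [forall j, (val (mu j) <= nu j)%N] && (mabs (fun j => val (mu j)) == m))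
     Sq q m (fun j => val (mu j)) * Sq q (n - m) (fun j => (nu j - val (mu j))%N)).
  rewrite mulr_sumr; apply: eq_bigr => mu /andP [/forallP Hle /eqP Hab].
  have Hd : mabs (fun j => (nu j - val (mu j))%N) = (n - m)%N.
    have Hs : (mabs (fun j => (nu j - val (mu j))%N) + mabs (fun j => val (mu j)))%N
        = mabs nu.
      by rewrite /mabs -big_split; apply: eq_bigr => j _; rewrite /= subnK ?Hle.
    by rewrite -[in RHS]hnu -Hs Hab addnK.
  rewrite qmulE (PE m) // (PE (n - m)%N) // qrealM.
  rewrite !mulrA -(mulrA _ (Sq q m _)) -qrealC.
  by rewrite !mulrA.
rewrite -(@splitS R q m (n - m) n nu hmn') subnKC // qscaleE (PE n) // mulrA -qrealM.
congr (qreal _ * _).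
have := bin_fact hmn'; move/(congr1 (fun k => k%:R : R)); rewrite !natrM => <-.
have h1 : (m`!%:R : R) != 0 by rewrite pnatr_eq0 -lt0n fact_gt0.
have h2 : ((n - m)`!%:R : R) != 0 by rewrite pnatr_eq0 -lt0n fact_gt0.
have h3 : ('C(n, m)%:R : R) != 0 by rewrite pnatr_eq0 -lt0n bin_gt0.
by field; rewrite h1 h2 h3.
Qed.
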